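(* Let $n\ge 2$ and let $\sigma$ be a uniformly random permutation of $E(G_n)$. Then the probability that there are distinct vertices $w_1,w_2\in W_B=E(G_n)$ with $N_{B(G_n,\sigma)}^{2}(w_1)=N_{B(G_n,\sigma)}^{2}(w_2)$ is in $\mathcal{O}\left(\frac{1}{n}\right)$ as $n\to\infty$.
   Context: $G_n$ is the graph with vertex set $\{1,\dots,2n\}$ and edge set $\{\{i,i+1\}: 1\le i\le 2n-1\}\cup\{\{2n,1\}\}\cup\{\{i,i+n\}: 1\le i\le n\}$. For a permutation $\sigma$ of $E(G_n)$, $B(G_n,\sigma)$ is the bipartite graph with parts $V_B=V(G_n)\times\{0,1\}$ and $W_B=E(G_n)$ and edge set $\{\{(v,0),e\}: v\in e\}\cup\{\{(v,1),e\}: v\in\sigma(e)\}$. For a graph $H$ and vertex $v$, the second neighbourhood is $N_H^{2}(v)=\{u\in V(H): u\neq v \text{ and there is } w \text{ with } \{v,w\},\{w,u\}\in E(H)\}$. *)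

(* Defs.v *)
From HB Require Import structures.
From mathcomp Require Import all_boot all_order all_fingroup all_algebra.
Set Implicit Arguments. Unset Strict Implicit. Unset Printing Implicit Defensive.
Import Order.TTheory GRing.Theory Num.Theory.

(* Vertices 1..2n of the paper are represented by 'I_(2n), vertex k <-> k-1. *)
Definition vtx (n : nat) := 'I_(2 * n).

(* Adjacency generating the edges of G_n (0-indexed):
   {i, i+1 mod 2n}  (the cycle, including {2n-1, 0} i.e. paper's {2n,1}),
   {i, i+n} for i < n  (the chords). *)
Definition gen_pair (n : nat) (i j : vtx n) : bool :=
  (val j == (val i).+1 %% (2 * n)) || ((val i < n) && (val j == val i + n)).

Definition Gedges (n : nat) : {set {set vtx n}} :=
  [set e : {set vtx n} | [exists i : vtx n, exists j : vtx n,
                            gen_pair i j && (e == [set i; j])]].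

Definition Edge (n : nat) := {e : {set vtx n} | e \in Gedges n}.

(* Vertex type of B(G_n, sigma): (V x {0,1}) + E, with bool false = 0, true = 1. *)
Definition BVtx (n : nat) := ((vtx n * bool) + Edge n)%type.

Definition Badj (n : nat) (s : {perm Edge n}) : rel (BVtx n) :=
  fun x y =>
    match x, y with
    | inl (v, b), inr e | inr e, inl (v, b) =>
        if b then v \in val (s e) else v \in val e
    | _, _ => false
    end.

Definition N2 (T : finType) (r : rel T) (v : T) : {set T} :=
  [set u | (u != v) && [exists w, r v w && r w u]].

Definition bad_perm (n : nat) (s : {perm Edge n}) : bool :=
  [exists w1 : Edge n, exists w2 : Edge n,
     (w1 != w2) && (N2 (Badj s) (inr w1) == N2 (Badj s) (inr w2))].

Definition prob_bad (n : nat) : rat :=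
  (#|[set s : {perm Edge n} | bad_perm s]|%:R / #|{perm Edge n}|%:R)%R.

(* Main.v *)
Require Import Defs.
From mathcomp Require Import all_boot all_order all_fingroup all_algebra.
From mathcomp Require Import zify ring.
Import Order.TTheory GRing.Theory Num.Theory.
Set Implicit Arguments. Unset Strict Implicit. Unset Printing Implicit Defensive.

Lemma fix_card (T : finType) (X : {set T}) (g : T -> T) :
  #|[set s : {perm T} | [forall x in X, s x == g x]]| <= (#|T| - #|X|)`!.
Proof.
set S := [set s : {perm T} | _].
case: (set_0Vmem S) => [->|[s0 Hs0]]; first by rewrite cards0.
have -> : (#|T| - #|X|) = #|~: X| by rewrite [#|X|]cardsCs subKn // max_card.
rewrite -card_perm.
rewrite -(card_in_imset (f := fun s => (s * s0^-1)%g)); last by move=> a b _ _; apply: mulIg.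
apply: subset_leq_card; apply/subsetP => t /imsetP [s Hs ->].
apply/subsetP => x; rewrite !inE; apply: contraR => /negbNE Hx.
move: Hs Hs0; rewrite !inE => /forall_inP /(_ x Hx) /eqP Hs /forall_inP /(_ x Hx) /eqP Hs0.
by rewrite permM Hs -Hs0 permK.
Qed.

Lemma card_permT (T : finType) : #|{perm T}| = #|T|`!.
Proof.
rewrite -cardsT -card_perm; apply: eq_card => s; rewrite !inE.
by apply/esym/subsetP => x _; rewrite inE.
Qed.

Lemma card_ex_in_le (S I : finType) (J : {pred I}) (F : I -> {set S}) :
  #|[set s | [exists i in J, s \in F i]]| <= \sum_(i in J) #|F i|.
Proof.
rewrite -sum1_card.
apply: (@leq_trans (\sum_s \sum_(i in J) ((s \in F i) : nat))).
  rewrite [X in X <= _]big_mkcond /=; apply: leq_sum => s _; rewrite inE.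
  case: existsP => // [[i /andP [Hi Hp]]]; by rewrite (bigD1 i) //= Hp.
rewrite exchange_big; apply: leq_sum => i _;
by rewrite -sum1_card [X in _ <= X]big_mkcond; apply: leq_sum => s _; case: (s \in F i).
Qed.

Lemma card_ex_in_const (S I : finType) (J : {pred I}) (F : I -> {set S}) K :
  (forall i, i \in J -> #|F i| <= K) ->
  #|[set s | [exists i in J, s \in F i]]| <= #|J| * K.
Proof.
move=> H; have h1 := @card_ex_in_le _ _ J F; apply: (leq_trans h1).
rewrite -sum_nat_const; exact: leq_sum.
Qed.

Lemma card_ex_le (S I : finType) (F : I -> {set S}) :
  #|[set s | [exists i, s \in F i]]| <= \sum_i #|F i|.
Proof.
have -> : [set s | [exists i, s \in F i]] = [set s | [exists i in predT, s \in F i]].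
  by apply/setP => s; rewrite !inE.
exact: (@card_ex_in_le _ _ predT F).
Qed.

Definition nbb n (i j : nat) : bool :=
  [|| j == i.+1, (i.+1 == 2*n) && (j == 0), i == j.+1,
      (j.+1 == 2*n) && (i == 0), j == i + n | i == j + n].

Lemma ord_eqE n (x y : vtx n) : (x == y) = (nat_of_ord x == nat_of_ord y).
Proof. by []. Qed.

Lemma modS_E n (i : vtx n) : (val i).+1 %% (2*n) = if (val i).+1 == 2*n then 0 else (val i).+1.
Proof.
have Hi : val i < 2*n := ltn_ord i.
case: ifP => [/eqP ->|h]; [exact: modnn | apply: modn_small; lia].
Qed.

Lemma gen_nbb n (i j : vtx n) : gen_pair i j -> nbb n i j.
Proof.
have Hi : val i < 2*n := ltn_ord i; have Hj : val j < 2*n := ltn_ord j.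
have ei : val i = nat_of_ord i by []; have ej : val j = nat_of_ord j by [].
rewrite /gen_pair /nbb modS_E; case: ifP => h; lia.
Qed.

Lemma nbb_sym n i j : nbb n i j -> nbb n j i.
Proof. rewrite /nbb; lia. Qed.

Lemma nbb_gen n (i j : vtx n) : 0 < n -> nbb n i j -> [set i; j] \in Gedges n.
Proof.
move=> n0 H.
have Hi : val i < 2*n := ltn_ord i; have Hj : val j < 2*n := ltn_ord j.
have ei : val i = nat_of_ord i by []; have ej : val j = nat_of_ord j by [].
have : gen_pair i j || gen_pair j i.
  move: H; rewrite /gen_pair /nbb !modS_E; case: ifP; case: ifP; move=> *; lia.
rewrite inE; case/orP => g; apply/existsP; [exists i | exists j]; apply/existsP;
  [exists j | exists i]; rewrite g //=.
by apply/eqP/setP => z; rewrite !inE orbC.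
Qed.

Lemma tri n a b c : 3 <= n -> nbb n a b -> nbb n a c -> nbb n b c -> False.
Proof. rewrite /nbb; lia. Qed.

Definition meet n (e f : Edge n) : bool := [exists v, (v \in val e) && (v \in val f)].
Definition Mset n (y : Edge n) : {set Edge n} := [set c | meet y c].
Definition Inc n (a : vtx n) : {set Edge n} := [set e : Edge n | a \in val e].
Definition NB n (a : vtx n) : {set vtx n} := [set x : vtx n | nbb n a x].

Lemma eshape n (e : Edge n) : exists i j : vtx n, nbb n i j /\ val e = [set i; j].
Proof.
have := valP e; rewrite inE => /existsP [i /existsP [j /andP [g /eqP E]]].
by exists i, j; split => //; apply: gen_nbb.
Qed.

Lemma meet2 n (e f : Edge n) i j : val e = [set i; j] -> meet e f = (i \in val f) || (j \in val f).
Proof.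
move=> E; apply/existsP/orP => [[v /andP []]|[h|h]].
  by rewrite E !inE => /orP [] /eqP -> ->; [left|right].
by exists i; rewrite E !inE eqxx h.
by exists j; rewrite E !inE eqxx h orbT.
Qed.

Lemma meet_sym n (e f : Edge n) : meet e f = meet f e.
Proof. by apply/existsP/existsP => [] [v h]; exists v; rewrite andbC. Qed.

Lemma meet_self n (e : Edge n) : meet e e.
Proof. have [i [j [_ E]]] := eshape e; by rewrite (meet2 _ E) E !inE eqxx. Qed.

Lemma NB_card n (a : vtx n) : #|NB a| <= 3.
Proof.
rewrite cardE.
pose l := [:: if (nat_of_ord a).+1 == 2*n then 0 else (nat_of_ord a).+1;
              if nat_of_ord a == 0 then (2*n).-1 else (nat_of_ord a).-1;
              if nat_of_ord a < n then nat_of_ord a + n else nat_of_ord a - n].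
have : size (map (@nat_of_ord _) (enum (NB a))) <= size l.
  apply: uniq_leq_size; first by rewrite (map_inj_uniq (@ord_inj _)) enum_uniq.
  move=> v /mapP [x]; rewrite mem_enum inE => Hx ->.
  have Ha := ltn_ord a; have Hx' := ltn_ord x.
  move: Hx; rewrite /l /nbb !inE; case: ifP; case: ifP; case: ifP; move=> *; lia.
by rewrite size_map.
Qed.

Lemma Inc_card n (a : vtx n) : #|Inc a| <= 3.
Proof.
rewrite -(card_imset _ val_inj).
apply: (@leq_trans #|[set [set a; x] | x in NB a]|); last first.
  exact: leq_trans (leq_imset_card _ _) (NB_card a).
apply: subset_leq_card; apply/subsetP => _ /imsetP [e He ->].
move: He; rewrite inE; have [i [j [Hij E]]] := eshape e; rewrite E !inE.
case/orP => /eqP Ea; subst a; apply/imsetP.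
  by exists j; rewrite ?inE.
exists i; first by rewrite inE; apply: nbb_sym.
by apply/setP => z; rewrite !inE orbC.
Qed.

Lemma M_card n (y : Edge n) : #|Mset y| <= 5.
Proof.
have [i [j [Hij E]]] := eshape y.
have -> : Mset y = Inc i :|: Inc j.
  by apply/setP => c; rewrite !inE (meet2 _ E).
rewrite cardsU.
have : 0 < #|Inc i :&: Inc j|.
  by rewrite card_gt0; apply/set0Pn; exists y; rewrite !inE E !inE !eqxx orbT.
have := Inc_card i; have := Inc_card j; lia.
Qed.

Lemma three_nb_nat n a : 3 <= n -> a < 2*n -> exists v1 v2 v3,
  [/\ v1 < 2*n, v2 < 2*n, v3 < 2*n & [/\ nbb n a v1, nbb n a v2, nbb n a v3
    & [/\ v1 != v2, v1 != v3 & v2 != v3]]].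
Proof.
move=> n3 Ha.
exists (if a.+1 == 2*n then 0 else a.+1), (if a == 0 then (2*n).-1 else a.-1),
  (if a < n then a + n else a - n).
rewrite /nbb; case: ifP; case: ifP; case: ifP; move=> *; repeat split; lia.
Qed.

Lemma three_nb n (a : vtx n) : 3 <= n -> exists x1 x2 x3 : vtx n,
  [/\ nbb n a x1, nbb n a x2, nbb n a x3 & [/\ x1 != x2, x1 != x3 & x2 != x3]].
Proof.
move=> n3.
have [v1 [v2 [v3 [h1 h2 h3 [n1 n2 n3' [d12 d13 d23]]]]]] := three_nb_nat n3 (ltn_ord a).
by exists (Ordinal h1), (Ordinal h2), (Ordinal h3); split.
Qed.

Lemma side n (w1 w2 : Edge n) (a b : vtx n) : 3 <= n -> val w1 = [set a; b] ->
  nbb n a b -> ~~ meet w1 w2 ->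
  exists d d' : Edge n, d != d' /\ [/\ a \in val d, a \in val d', b \notin val d,
     b \notin val d' & ~~ (meet w2 d && meet w2 d')].
Proof.
move=> n3 E1 Hab Hm.
have n0 : 0 < n by lia.
have [p [q [Hpq E2]]] := eshape w2.
move: Hm; rewrite (meet2 _ E1) E2 !inE !ord_eqE => Hm.
have Hb := ltn_ord b; have Ha := ltn_ord a; have Hp := ltn_ord p; have Hq := ltn_ord q.
have key : forall (x x' : vtx n) (Hx : nbb n a x) (Hx' : nbb n a x'), x != x' -> x != b -> x' != b ->
  exists d d' : Edge n, d != d' /\ [/\ a \in val d, a \in val d', b \notin val d,
     b \notin val d' & ~~ (meet w2 d && meet w2 d')].
  move=> x x' Hx Hx' dxx' dxb dx'b.
  have Hx0 := ltn_ord x; have Hx0' := ltn_ord x'.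
  have nab : nat_of_ord a != nat_of_ord b by move: Hab n3; rewrite /nbb; clear; lia.
  have nax : nat_of_ord x != nat_of_ord a by move: Hx n3; rewrite /nbb; clear; lia.
  move: dxx' dxb dx'b; rewrite !ord_eqE => dxx' dxb dx'b.
  exists (Sub [set a; x] (nbb_gen n0 Hx)), (Sub [set a; x'] (nbb_gen n0 Hx')).
  rewrite !(meet2 _ E2) /= !inE !ord_eqE eqxx; split; last split => //.
  - apply/negP => /eqP /(congr1 val) /= /setP /(_ x); rewrite !inE !ord_eqE eqxx orbT.
    move=> h; move: h nax dxx'; clear; lia.
  - move: nab dxb; clear; lia.
  - move: nab dx'b; clear; lia.
  - apply/negP => /andP [m1 m2].
    have hx : (nat_of_ord x == p) || (nat_of_ord x == q) by move: m1 Hm; clear; lia.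
    have hx' : (nat_of_ord x' == p) || (nat_of_ord x' == q) by move: m2 Hm; clear; lia.
    have hxx : nbb n x x'.
      case/orP: hx => /eqP ex; case/orP: hx' => /eqP ex'; rewrite ex ex' //.
      + by move: dxx'; rewrite ex ex' eqxx.
      + exact: nbb_sym.
      + by move: dxx'; rewrite ex ex' eqxx.
    exact: (tri n3 Hx Hx' hxx).
have [x1 [x2 [x3 [N1 N2 N3 [D12 D13 D23]]]]] := three_nb a n3.
case: (eqVneq x1 b) => [e1|b1].
  apply: (key x2 x3) => //; by [rewrite -e1 eq_sym | rewrite -e1 eq_sym].
case: (eqVneq x2 b) => [e2|b2].
  apply: (key x1 x3) => //; by rewrite -e2 eq_sym.
by apply: (key x1 x2).
Qed.

Definition Dset n (w1 w2 : Edge n) : {set Edge n} :=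
  [set d | (d != w1) && meet w1 d && ~~ meet w2 d].

Lemma inD n (w1 w2 d : Edge n) a b : val w1 = [set a; b] -> a \in val d ->
  b \notin val d -> ~~ meet w2 d -> d \in Dset w1 w2.
Proof.
move=> E ha hb hm; rewrite inE hm andbT (meet2 _ E) ha andbT.
by apply/negP => /eqP Ed; move: hb; rewrite Ed E !inE eqxx orbT.
Qed.

Lemma side1 n (w1 w2 : Edge n) (a b : vtx n) : 3 <= n -> val w1 = [set a; b] ->
  nbb n a b -> ~~ meet w1 w2 ->
  exists d : Edge n, [/\ a \in val d, b \notin val d & d \in Dset w1 w2].
Proof.
move=> n3 E Hab Hm.
have [d [d' [_ [a1 a2 b1 b2 hm]]]] := side n3 E Hab Hm.
case: (boolP (meet w2 d)) => h.
  by exists d'; split => //; apply: (inD E) => //; move: hm; rewrite h.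
by exists d; split => //; apply: (inD E).
Qed.

Lemma swapE n (w : Edge n) (a b : vtx n) : val w = [set a; b] -> val w = [set b; a].
Proof. by move=> ->; apply/setP => z; rewrite !inE orbC. Qed.

Lemma D2 n (w1 w2 : Edge n) : 3 <= n -> ~~ meet w1 w2 -> 2 <= #|Dset w1 w2|.
Proof.
move=> n3 Hm.
have [a [b [Hab E]]] := eshape w1.
have [da [a1 b1 D1]] := side1 n3 E Hab Hm.
have [db [a2 b2 D2]] := side1 n3 (swapE E) (nbb_sym Hab) Hm.
have hne : da != db by apply/negP => /eqP e; move: b2; rewrite -e a1.
apply: (@leq_trans #|[set da; db]|); first by rewrite cards2 hne.
by apply: subset_leq_card; apply/subsetP => x; rewrite in_set2 => /orP [] /eqP ->.
Qed.

Definition near n (w1 w2 : Edge n) : bool := [exists u, meet w1 u && meet u w2].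

Lemma D3 n (w1 w2 : Edge n) : 3 <= n -> ~~ near w1 w2 -> 3 <= #|Dset w1 w2|.
Proof.
move=> n3 Hn.
have Hm : ~~ meet w1 w2.
  by apply: contra Hn => h; apply/existsP; exists w1; rewrite meet_self h.
have nomeet : forall d, meet w1 d -> ~~ meet w2 d.
  move=> d h; apply: contra Hn => h'; apply/existsP; exists d; by rewrite h meet_sym h'.
have [a [b [Hab E]]] := eshape w1.
have [d [d' [hne [a1 a2 b1 b2 _]]]] := side n3 E Hab Hm.
have [db [a3 b3 D3]] := side1 n3 (swapE E) (nbb_sym Hab) Hm.
have Dd : d \in Dset w1 w2 by apply: (inD E) => //; apply: nomeet; rewrite (meet2 _ E) a1.
have Dd' : d' \in Dset w1 w2 by apply: (inD E) => //; apply: nomeet; rewrite (meet2 _ E) a2.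
apply: (@leq_trans #|db |: [set d; d']|).
  rewrite cardsU1 cards2 hne !inE.
  have /negbTE -> : db != d by apply/negP => /eqP e; move: b3; rewrite e a1.
  by have /negbTE -> : db != d' by apply/negP => /eqP e; move: b3; rewrite e a2.
by apply: subset_leq_card; apply/subsetP => x; rewrite in_setU1 in_set2 => /or3P [] /eqP ->.
Qed.

Lemma N2_inr n (s : {perm Edge n}) (w e : Edge n) :
  (inr e \in N2 (Badj s) (inr w)) = (e != w) && (meet w e || meet (s w) (s e)).
Proof.
rewrite inE; congr andb.
apply/existsP/orP => [[[[v b]|f] /andP [h1 h2]]|[/existsP [v /andP [h1 h2]]|/existsP [v /andP [h1 h2]]]].
- move: h1 h2; rewrite /Badj /=; case: b => h1 h2; [right|left]; apply/existsP; exists v; by rewrite h1 h2.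
- by move: h1; rewrite /Badj.
- by exists (inl (v, false)); rewrite /Badj /= h1 h2.
- by exists (inl (v, true)); rewrite /Badj /= h1 h2.
Qed.

Lemma bad_meet n (s : {perm Edge n}) (w1 w2 : Edge n) : w1 != w2 ->
  N2 (Badj s) (inr w1) == N2 (Badj s) (inr w2) -> ~~ meet w1 w2.
Proof.
move=> ne /eqP E; apply/negP => m.
have : inr w2 \in N2 (Badj s) (inr w1) by rewrite N2_inr eq_sym ne m.
by rewrite E N2_inr eqxx.
Qed.

Lemma bad_D n (s : {perm Edge n}) (w1 w2 d : Edge n) :
  N2 (Badj s) (inr w1) == N2 (Badj s) (inr w2) -> d \in Dset w1 w2 -> meet (s w2) (s d).
Proof.
move=> /eqP E; rewrite inE => /andP [/andP [h1 h2] h3].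
have : inr d \in N2 (Badj s) (inr w1) by rewrite N2_inr h1 h2.
by rewrite E N2_inr => /andP [_ /orP [h|//]]; rewrite h in h3.
Qed.

Definition dd n (w1 w2 : Edge n) i := nth w2 (enum (Dset w1 w2)) i.
Definition Xset n (w1 w2 : Edge n) : {set Edge n} :=
  w2 |: (dd w1 w2 0 |: [set dd w1 w2 1; dd w1 w2 2]).
Definition gpat n (w1 w2 y c0 c1 c2 : Edge n) (x : Edge n) : Edge n :=
  if x == w2 then y else if x == dd w1 w2 0 then c0 else if x == dd w1 w2 1 then c1 else c2.
Definition fixS n (w1 w2 y c0 c1 c2 : Edge n) : {set {perm Edge n}} :=
  [set s : {perm Edge n} | [forall x in Xset w1 w2, s x == gpat w1 w2 y c0 c1 c2 x]].
Definition F2 n (w1 w2 y c0 c1 : Edge n) : {set {perm Edge n}} :=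
  [set s | [exists c2 in Mset y, s \in fixS w1 w2 y c0 c1 c2]].
Definition F1 n (w1 w2 y c0 : Edge n) : {set {perm Edge n}} :=
  [set s | [exists c1 in Mset y, s \in F2 w1 w2 y c0 c1]].
Definition F0 n (w1 w2 y : Edge n) : {set {perm Edge n}} :=
  [set s | [exists c0 in Mset y, s \in F1 w1 w2 y c0]].
Definition Bad n (w1 w2 : Edge n) : {set {perm Edge n}} :=
  [set s | (w1 != w2) && (N2 (Badj s) (inr w1) == N2 (Badj s) (inr w2))].

Lemma nth_or (T : eqType) (x0 : T) (l : seq T) i : nth x0 l i = x0 \/ nth x0 l i \in l.
Proof.
case: (ltnP i (size l)) => h; [right; exact: mem_nth | left; exact: nth_default].
Qed.

Lemma dd_M n (s : {perm Edge n}) (w1 w2 : Edge n) i :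
  N2 (Badj s) (inr w1) == N2 (Badj s) (inr w2) -> s (dd w1 w2 i) \in Mset (s w2).
Proof.
move=> E; rewrite inE /dd; case: (nth_or w2 (enum (Dset w1 w2)) i) => [->|].
  exact: meet_self.
by rewrite mem_enum; apply: bad_D.
Qed.

Lemma Bad_sub n (w1 w2 : Edge n) :
  Bad w1 w2 \subset [set s | [exists y, s \in F0 w1 w2 y]].
Proof.
apply/subsetP => s; rewrite inE => /andP [ne E]; rewrite inE.
apply/existsP; exists (s w2); rewrite inE; apply/existsP; exists (s (dd w1 w2 0)).
rewrite dd_M //= inE; apply/existsP; exists (s (dd w1 w2 1)).
rewrite dd_M //= inE; apply/existsP; exists (s (dd w1 w2 2)).
rewrite dd_M //= inE; apply/forall_inP => x Hx; rewrite /gpat.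
case: ifP => [/eqP -> //|h0]. case: ifP => [/eqP -> //|h1]. case: ifP => [/eqP -> //|h2].
by move: Hx; rewrite !inE h0 h1 h2 /= => /eqP ->.
Qed.

Lemma card_ex_const (S I : finType) (F : I -> {set S}) K :
  (forall i, #|F i| <= K) -> #|[set s | [exists i, s \in F i]]| <= #|I| * K.
Proof.
move=> H.
have -> : [set s | [exists i, s \in F i]] = [set s | [exists i in predT, s \in F i]].
  by apply/setP => s; rewrite !inE.
exact: (@card_ex_in_const _ _ predT F K).
Qed.

Lemma nest5 (S I : finType) (J : {set I}) (F : I -> {set S}) K : #|J| <= 5 ->
  (forall i, i \in J -> #|F i| <= K) -> #|[set s | [exists i in J, s \in F i]]| <= 5 * K.
Proof.
move=> HJ H; apply: leq_trans (@card_ex_in_const _ _ J F K H) _.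
exact: leq_mul.
Qed.

Lemma Bad_card0 n (w1 w2 : Edge n) :
  #|Bad w1 w2| <= #|{: Edge n}| * (5 * (5 * (5 * (#|{: Edge n}| - #|Xset w1 w2|)`!))).
Proof.
apply: leq_trans (subset_leq_card (Bad_sub w1 w2)) _.
apply: card_ex_const => y.
apply: nest5 (M_card y) _ => c0 _.
apply: nest5 (M_card y) _ => c1 _.
apply: nest5 (M_card y) _ => c2 _.
exact: fix_card.
Qed.

Lemma w2_notD n (w1 w2 : Edge n) : w2 \notin Dset w1 w2.
Proof. by rewrite inE meet_self !andbF. Qed.

Lemma X3 n (w1 w2 : Edge n) : 2 <= #|Dset w1 w2| -> 3 <= #|Xset w1 w2|.
Proof.
move=> H.
have sz : size (enum (Dset w1 w2)) = #|Dset w1 w2| by rewrite cardE.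
have u := enum_uniq (Dset w1 w2).
have i0 : dd w1 w2 0 \in Dset w1 w2 by rewrite -mem_enum /dd mem_nth // sz; lia.
have i1 : dd w1 w2 1 \in Dset w1 w2 by rewrite -mem_enum /dd mem_nth // sz; lia.
have d01 : dd w1 w2 0 != dd w1 w2 1 by rewrite /dd nth_uniq // sz; lia.
have nw : forall d, d \in Dset w1 w2 -> w2 != d.
  by move=> d hd; apply/eqP => e; move: hd; rewrite -e (negbTE (w2_notD w1 w2)).
apply: (@leq_trans #|w2 |: [set dd w1 w2 0; dd w1 w2 1]|).
  by rewrite cardsU1 cards2 d01 !inE (negbTE (nw _ i0)) (negbTE (nw _ i1)).
apply: subset_leq_card; apply/subsetP => x.
rewrite /Xset !inE => /or3P [] ->; by rewrite ?orbT.
Qed.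

Lemma X4 n (w1 w2 : Edge n) : 3 <= #|Dset w1 w2| -> 4 <= #|Xset w1 w2|.
Proof.
move=> H.
have sz : size (enum (Dset w1 w2)) = #|Dset w1 w2| by rewrite cardE.
have u := enum_uniq (Dset w1 w2).
have i0 : dd w1 w2 0 \in Dset w1 w2 by rewrite -mem_enum /dd mem_nth // sz; lia.
have i1 : dd w1 w2 1 \in Dset w1 w2 by rewrite -mem_enum /dd mem_nth // sz; lia.
have i2 : dd w1 w2 2 \in Dset w1 w2 by rewrite -mem_enum /dd mem_nth // sz; lia.
have d01 : dd w1 w2 0 != dd w1 w2 1 by rewrite /dd nth_uniq // sz; lia.
have d02 : dd w1 w2 0 != dd w1 w2 2 by rewrite /dd nth_uniq // sz; lia.
have d12 : dd w1 w2 1 != dd w1 w2 2 by rewrite /dd nth_uniq // sz; lia.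
have nw : forall d, d \in Dset w1 w2 -> w2 != d.
  by move=> d hd; apply/eqP => e; move: hd; rewrite -e (negbTE (w2_notD w1 w2)).
rewrite /Xset cardsU1 cardsU1 cards2 d12 !inE (negbTE (nw _ i0)) (negbTE (nw _ i1))
  (negbTE (nw _ i2)) (negbTE d01) (negbTE d02).
done.
Qed.

Lemma Bad_card n (w1 w2 : Edge n) : 3 <= n ->
  #|Bad w1 w2| <= near w1 w2 * (#|{: Edge n}| * (5 * (5 * (5 * (#|{: Edge n}| - 3)`!))))
                  + #|{: Edge n}| * (5 * (5 * (5 * (#|{: Edge n}| - 4)`!))).
Proof.
move=> n3; case: (boolP (meet w1 w2)) => hm.
  have -> : Bad w1 w2 = set0.
    apply/setP => s; rewrite !inE; apply/negP => /andP [ne E].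
    by move: (bad_meet ne E); rewrite hm.
  by rewrite cards0.
apply: leq_trans (Bad_card0 w1 w2) _.
case: (boolP (near w1 w2)) => hn.
  rewrite mul1n; apply: leq_trans (leq_addr _ _).
  do 4 (apply: leq_mul => //).
  by apply: leq_fact; apply: leq_sub2l; apply: X3; apply: D2.
rewrite mul0n add0n.
do 4 (apply: leq_mul => //).
by apply: leq_fact; apply: leq_sub2l; apply: X4; apply: D3.
Qed.

Lemma sum_constT (I : finType) K : \sum_(i : I) K = #|I| * K.
Proof. by rewrite sum_nat_const. Qed.

Lemma near_card n (w1 : Edge n) : #|[set w2 | near w1 w2]| <= 25.
Proof.
have -> : [set w2 | near w1 w2] = [set w2 | [exists u in Mset w1, w2 \in Mset u]].
  by apply/setP => w2; rewrite !inE; apply: eq_existsb => u; rewrite !inE.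
apply: (@leq_trans (5 * 5)) => //.
apply: nest5 (M_card w1) _ => u _; exact: M_card.
Qed.

Lemma total_bad n : 3 <= n ->
  #|[set s : {perm Edge n} | bad_perm s]| <=
  #|{: Edge n}| * (25 * (#|{: Edge n}| * (5 * (5 * (5 * (#|{: Edge n}| - 3)`!))))
                  + #|{: Edge n}| * (#|{: Edge n}| * (5 * (5 * (5 * (#|{: Edge n}| - 4)`!))))).
Proof.
move=> n3.
have -> : [set s : {perm Edge n} | bad_perm s] =
          [set s | [exists w1, s \in [set s | [exists w2, s \in Bad w1 w2]]]].
  apply/setP => s; rewrite !inE /bad_perm; apply: eq_existsb => w1; rewrite inE.
  by apply: eq_existsb => w2; rewrite inE.
apply: card_ex_const => w1.
apply: leq_trans (card_ex_le (Bad w1)) _.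
apply: (@leq_trans (\sum_(w2 : Edge n) (near w1 w2 * (#|{: Edge n}| * (5 * (5 * (5 * (#|{: Edge n}| - 3)`!))))
                  + #|{: Edge n}| * (5 * (5 * (5 * (#|{: Edge n}| - 4)`!)))))).
  by apply: leq_sum => w2 _; apply: Bad_card.
rewrite big_split /= sum_constT -big_distrl /=.
rewrite leq_add2r; apply: leq_mul => //.
rewrite (eq_bigr (fun i => if near w1 i then 1 else 0)); last by move=> i _; case: (near w1 i).
rewrite -big_mkcond sum1_card.
apply: leq_trans (near_card w1).
by rewrite leq_eqVlt; apply/orP; left; apply/eqP; apply: eq_card => i; rewrite inE.
Qed.

Lemma modS_nat n k : k < 2*n -> k.+1 %% (2*n) = if k.+1 == 2*n then 0 else k.+1.
Proof.
move=> Hk; case: ifP => [/eqP ->|h]; [exact: modnn | apply: modn_small; lia].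
Qed.

Lemma m_ge n : 3 <= n -> 2 * n <= #|{: Edge n}|.
Proof.
move=> n3.
have n0 : 0 < n by lia.
have H2 : 0 < 2 * n by lia.
pose sc (a : vtx n) : vtx n := Ordinal (ltn_pmod (nat_of_ord a).+1 H2).
have hsc : forall a : vtx n, nbb n a (sc a).
  move=> a; have Ha := ltn_ord a; rewrite /nbb /= modS_nat //; case: ifP => h; lia.
pose f (a : vtx n) : Edge n := Sub [set a; sc a] (nbb_gen n0 (hsc a)).
have finj : injective f.
  move=> a b /(congr1 val) /= E.
  have ha : a \in [set b; sc b] by rewrite -E !inE eqxx.
  have hb : b \in [set a; sc a] by rewrite E !inE eqxx.
  move: ha hb; rewrite !inE !ord_eqE /= !modS_nat ?ltn_ord //.
  have Ha := ltn_ord a; have Hb := ltn_ord b.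
  move=> ha hb; apply/eqP; rewrite ord_eqE; move: ha hb.
  case: ifP; case: ifP; move=> *; lia.
have := max_card (f @: [set: vtx n]).
by rewrite card_imset // cardsT card_ord.
Qed.

Lemma key_nat n t m : 3 <= n -> 2 * n <= m ->
  t <= m * (25 * (m * (5 * (5 * (5 * (m - 3)`!))))
                  + m * (m * (5 * (5 * (5 * (m - 4)`!))))) ->
  t * n <= (100 * 100) * m`!.
Proof.
move=> n3 hm ht.
have [k ek] : exists k, m = k.+4 by exists (m - 4); lia.
subst m.
have e3 : k.+4 - 3 = k.+1 by lia.
have e4 : k.+4 - 4 = k by lia.
move: ht; rewrite e3 e4 !factS.
have F0 := fact_gt0 k.
move: F0; set F := k`! => F0 ht.
set T := k.+4 * (25 * (k.+4 * (5 * (5 * (5 * (k.+1 * F))))) + k.+4 * (k.+4 * (5 * (5 * (5 * F))))) in ht.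
have P : (k + 4) * (k + 4) * (26 * k + 29) <= 160 * (k + 3) * (k + 2) * (k + 1).
  have eL : (k + 4) * (k + 4) * (26 * k + 29) = 26 * (k * k * k) + 237 * (k * k) + 648 * k + 464 by ring.
  have eR : 160 * (k + 3) * (k + 2) * (k + 1) = 160 * (k * k * k) + 960 * (k * k) + 1760 * k + 960 by ring.
  rewrite eL eR; lia.
have h1 : t * n <= T * n by apply: leq_mul.
have h2 : T * n * 2 <= T * k.+4 by rewrite -mulnA; apply: leq_mul => //; lia.
have h3 := leq_mul P (leqnn (125 * (k + 4) * F)).
have eT : T * k.+4 = (k + 4) * (k + 4) * (26 * k + 29) * (125 * (k + 4) * F).
  rewrite /T; ring.
rewrite eT in h2.
have eR : (100 * 100) * (k.+4 * (k.+3 * (k.+2 * (k.+1 * F)))) * 2 =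
          160 * (k + 3) * (k + 2) * (k + 1) * (125 * (k + 4) * F) by ring.
move: h1 h2 h3 eR.
set A := (k + 4) * (k + 4) * (26 * k + 29) * (125 * (k + 4) * F).
set B := 160 * (k + 3) * (k + 2) * (k + 1) * (125 * (k + 4) * F).
set R := (k.+4 * (k.+3 * (k.+2 * (k.+1 * F)))).
set TN := T * n.
move=> h1 h2 h3 eR.
lia.
Qed.
Lemma final_rat (t n F C : nat) : (0 < n)%N -> (0 < F)%N -> (t * n <= C * F)%N ->
  (t%:R / F%:R <= C%:R / n%:R :> rat)%R.
Proof.
move=> hn hf h.
have hf' : (0 < F%:R :> rat)%R by rewrite ltr0n.
have hn' : (0 < n%:R :> rat)%R by rewrite ltr0n.
by rewrite (ler_pdivrMr _ _ hf') mulrAC (ler_pdivlMr _ _ hn') -!natrM ler_nat.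
Qed.

Theorem mainTheorem10 :
  exists (C : rat) (N : nat), forall n : nat, (2 <= n)%N -> (N <= n)%N ->
    (prob_bad n <= C / n%:R)%R.
Proof.
exists ((100 * 100)%N%:R)%R, 3 => n _ n3.
have hm := m_ge n3.
have ht := total_bad n3.
have hk := key_nat n3 hm ht.
have n0 : (0 < n)%N by lia.
rewrite /prob_bad card_permT.
apply: final_rat n0 (fact_gt0 _) hk.
Qed.
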